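(* Let $mG^{(0)}$ be a finite canonical misinformation game, let $\mathcal{AD}^{\infty}(\{mG^{(0)}\})$ be the Stable Set of the Adaptation Procedure on $mG^{(0)}$, and let $\mathcal{T}$ be its terminal set. Then $$\mathcal{AD}^{\infty}(\{mG^{(0)}\}) = \mathcal{AD}^{*}(\mathcal{T}).$$
   Context: A normal-form game is $G=\langle N,S,P\rangle$ with a finite set of players $N$, finite pure strategy sets $S_i$ ($i\in N$), set of pure strategy profiles (positions) $S=\times_{i\in N}S_i$, and payoffs $P=(P_i)_{i\in N}$ with $P_i:S\to\mathbb{R}$. A misinformation game is a tuple $mG=\langle G^0,G^1,\dots,G^{|N|}\rangle$ of normal-form games, $G^0$ (the actual game) having $|N|$ players; $G^i$ is the subjective game of player $i$. It is canonical if every $G^i$ differs from $G^0$ only in its payoffs (so $G^i=\langle N,S,P^i\rangle$ for all $i$) and in every $G^i$ all players have the same number of pure strategies. A misinformed strategy profile $\sigma=(\sigma_1,\dots,\sigma_{|N|})$ is a natural misinformed equilibrium (nme) if for each $i$, $\sigma_i$ is player $i$'s component of some (mixed) Nash equilibrium of $G^i$; $NME(mG)$ denotes the set of these. For a profile $\sigma$, $\chi(\sigma)=\mathrm{supp}(\sigma_1)\times\dots\times\mathrm{supp}(\sigma_{|N|})\subseteq S$. For a position $\vec v\in S$, the $\vec v$-update $mG_{\vec v}$ is the misinformation game $\langle G^0,G'^1,\dots,G'^{|N|}\rangle$ where $G'^i=\langle N,S,P'^i\rangle$ with $P'^i(\vec v)=P^0(\vec v)$ (the whole payoff vector) and $P'^i(\vec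 u)=P^i(\vec u)$ for $\vec u\neq\vec v$. For a set $M$ of misinformation games, $\mathcal{AD}(M)=\{mG_{\vec u}: mG\in M,\ \sigma\in NME(mG),\ \vec u\in\chi(\sigma)\}$; $\mathcal{AD}^{(0)}(M)=M$ and $\mathcal{AD}^{(t+1)}(M)=\mathcal{AD}^{(t)}(\mathcal{AD}(M))$. The procedure terminates at the smallest $t\ge0$ with $\mathcal{AD}^{(t+1)}(M)=\mathcal{AD}^{(t)}(M)$; this $t$ is the length $\mathfrak{L}$, and $\mathcal{AD}^{\infty}(M)=\mathcal{AD}^{(\mathfrak{L})}(M)$ is the Stable Set. $\mathcal{AD}^{*}(M)=\bigcup_{t\ge0}\mathcal{AD}^{(t)}(M)$. The terminal set of the Adaptation Procedure on $mG^{(0)}$ is $\mathcal{T}=\{mG\in\mathcal{AD}^*(\{mG^{(0)}\}) : mG\in\mathcal{AD}(\{mG\})\}$. *)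

(* Defs.v *)
From HB Require Import structures.
From mathcomp Require Import all_boot all_order all_algebra.
From mathcomp Require Import classical_sets reals.
Set Implicit Arguments. Unset Strict Implicit. Unset Printing Implicit Defensive.
Import Order.TTheory GRing.Theory Num.Theory.
Local Open Scope ring_scope.
Local Open Scope classical_set_scope.

Section MisinfoGames.
Variables (R : realType) (n : nat) (S : 'I_n -> finType).

(* Players are N = 'I_n; player i has pure strategy set S i.
   Positions (pure strategy profiles) S = prod_i S_i. *)
Definition position := {dffun forall i : 'I_n, S i}.

(* A payoff function P = (P_i)_{i in N} : S -> R^N.  Since in a canonical
   misinformation game all G^i share N and S with G^0, a game is
   determined by its payoff function. *)
Definition payoff := position -> 'I_n -> R.

(* Canonical misinformation game <G^0, G^1, ..., G^|N|>:
   mg_act = payoff of the actual game G^0,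
   mg_subj i = payoff of the subjective game G^i of player i. *)
Record mgame := MGame { mg_act : payoff ; mg_subj : 'I_n -> payoff }.

Definition mixed (T : finType) (x : {ffun T -> R}) : Prop :=
  (forall t, 0 <= x t) /\ \sum_(t : T) x t = 1.

Definition mprofile := forall i : 'I_n, {ffun S i -> R}.

Definition is_mprofile (sigma : mprofile) : Prop := forall i, mixed (sigma i).

Definition dev_payoff (P : payoff) (j : 'I_n) (sigma : mprofile)
  (tau : {ffun S j -> R}) : R :=
  \sum_(p : position) (tau (p j) * (\prod_(i | i != j) sigma i (p i)) * P p j).

Arguments dev_payoff P j sigma tau : clear implicits.

Definition exp_payoff (P : payoff) (j : 'I_n) (sigma : mprofile) : R :=
  dev_payoff P j sigma (sigma j).

Definition nash (P : payoff) (sigma : mprofile) : Prop :=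
  is_mprofile sigma /\
  forall (j : 'I_n) (tau : {ffun S j -> R}),
    mixed tau -> dev_payoff P j sigma tau <= exp_payoff P j sigma.

Definition NME (mG : mgame) : set mprofile :=
  [set sigma | forall i : 'I_n,
     exists sigma', nash (mg_subj mG i) sigma' /\ sigma' i = sigma i].

Definition chi (sigma : mprofile) : set position :=
  [set p | forall i : 'I_n, p i \in [set s | sigma i s != 0]%SET].

Definition update (mG : mgame) (v : position) : mgame :=
  MGame (mg_act mG)
        (fun i u => if u == v then mg_act mG v else mg_subj mG i u).

Definition AD (M : set mgame) : set mgame :=
  [set mG' | exists mG sigma u,
     [/\ M mG, NME mG sigma, chi sigma u & mG' = update mG u]].

Fixpoint ADn (t : nat) (M : set mgame) : set mgame :=
  match t with
  | 0 => M
  | t'.+1 => ADn t' (AD M)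
  end.

Definition is_length (M : set mgame) (L : nat) : Prop :=
  ADn L.+1 M = ADn L M /\ forall t, (t < L)%N -> ADn t.+1 M <> ADn t M.

Definition ADstar (M : set mgame) : set mgame :=
  [set mG | exists t, ADn t M mG].

Definition terminal (mG0 : mgame) : set mgame :=
  [set mG | ADstar [set mG0] mG /\ AD [set mG] mG].

End MisinfoGames.

(* Main.v *)
Require Import Defs.
From HB Require Import structures.
From mathcomp Require Import all_boot all_order all_algebra.
From mathcomp Require Import boolp classical_sets reals.
Local Open Scope classical_set_scope.

Section Aux.
Variables (R : realType) (n : nat) (S : 'I_n -> finType).
Implicit Types (M N : set (mgame R S)).

Lemma ADnS M t : ADn t.+1 M = AD (ADn t M).
Proof. by elim: t M => [//|t IH] M /=; rewrite -IH. Qed.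

Lemma AD_mono M N : M `<=` N -> AD M `<=` AD N.
Proof.
move=> MN g [g0 [sig [u [H1 H2 H3 H4]]]].
by exists g0, sig, u; split => //; apply: MN.
Qed.

Lemma ADn_mono t M N : M `<=` N -> ADn t M `<=` ADn t N.
Proof.
move=> MN; elim: t => [//|t IH]; rewrite !ADnS; exact: AD_mono.
Qed.

Lemma ADn_fix t M : AD M = M -> ADn t M = M.
Proof. by move=> H; elim: t => [//|t IH]; rewrite ADnS IH. Qed.

Definition agree (g : mgame R S) : {set position S} :=
  [set u | [forall i, forall j, mg_subj g i u j == mg_act g u j]].

Lemma step (g : mgame R S) u :
  update g u = g \/ (agree g \proper agree (update g u))%SET.
Proof.
case: g => a s.
have Hu : u \in agree (update (MGame a s) u).
  by rewrite inE; apply/forallP => i; apply/forallP => j; rewrite /= eqxx.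
have Hsub : (agree (MGame a s) \subset agree (update (MGame a s) u))%SET.
  apply/fintype.subsetP => v; rewrite !inE /=; case: eqP => [-> _|//] ; try done.
  by apply/forallP => i; apply/forallP => j.
case Hin: (u \in agree (MGame a s)).
- left; rewrite /update /=; congr MGame; apply/funext => i; apply/funext => v.
  case: eqP => [->|//]; apply/funext => j.
  move: Hin; rewrite inE => /forallP /(_ i) /forallP /(_ j) /eqP.
  by move=> /= ->.
- right; apply/fintype.properP; split => //; exists u => //; by rewrite Hin.
Qed.

End Aux.
Arguments agree {R n S}.
Arguments step {R n S}.
Arguments ADn_fix {R n S}.
Arguments ADn_mono {R n S}.
Arguments AD_mono {R n S}.
Arguments ADnS {R n S}.

Theorem theorem1 (R : realType) (n : nat) (S : 'I_n -> finType)
  (hS : forall i, (0 < #|S i|)%N) (mG0 : mgame R S) (L : nat) :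
  is_length [set mG0] L ->
  ADn L [set mG0] = ADstar (terminal mG0).
Proof.
move=> [Hfix _].
set X := ADn L [set mG0].
have HX : AD X = X by rewrite -ADnS.
have Hge : forall j, ADn (L + j) [set mG0] = X.
  by elim=> [|j IH]; rewrite ?addn0 // addnS ADnS IH.
apply/seteqP; split.
-
  suff: forall m g, X g -> (#|agree g| < m)%N -> ADstar (terminal mG0) g.
    by move=> H g Xg; exact: (H _ g Xg (ltnSn _)).
  elim=> [//|m IH] g Xg.
  have := Xg; rewrite -HX => -[g' [sig [u [Xg' Hnme Hchi ->]]]] Hm.
  case: (step g' u) => [Heq|Hpr].
  + exists 0 => /=; rewrite Heq; split; first by exists L.
    by exists g', sig, u; split => //; rewrite Heq.
  + have [t Ht] : ADstar (terminal mG0) g'.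
      apply: IH => //; exact: leq_trans (proper_card Hpr) Hm.
    exists t.+1; rewrite ADnS; by exists g', sig, u.
- move=> g [t Hg].
  have TX : terminal mG0 `<=` X.
    move=> h [[k Hk] Hh].
    have Hkj : forall j, ADn (k + j) [set mG0] h.
      elim=> [|j IHj]; first by rewrite addn0.
      rewrite addnS ADnS; have sub : [set h] `<=` ADn (k + j) [set mG0] by move=> x /= ->.
      exact: (AD_mono _ _ sub h Hh).
    rewrite -(Hge k) addnC; exact: Hkj.
  by rewrite -(ADn_fix t _ HX); exact: (ADn_mono t _ _ TX).
Qed.
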